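(* Let $(M,S)$ be a spanned map, with $M=(H,\sigma,\alpha)$ and face-permutation $\phi=\sigma\alpha$, and let $\theta$ be its motion function. Then $\theta_{|S}=\sigma_{|S}\alpha_{|S}$ and $\theta_{|\bar S}=\phi_{|\bar S}\alpha_{|\bar S}$, where $\bar S=H\setminus S$. That is, $\theta_{|S}$ is the face-permutation of the pseudo map $M_{|S}$ and $\theta_{|\bar S}$ is the face-permutation of the dual pseudo map $M^*_{|\bar S}$. In particular, a spanned map is a covered map if and only if its motion function is a cyclic permutation.
   Context: Permutations compose right to left. A map is $M=(H,\sigma,\alpha)$ with $H$ finite, $\alpha$ a fixed-point-free involution, $\sigma$ a permutation, $\langle\sigma,\alpha\rangle$ transitive on $H$, and a root in $H$; a pseudo map is the same without transitivity. Its face-permutation is $\sigma\alpha$; faces are its cycles; unicellular means one face. For a permutation $\pi$ and $S\subseteq H$, $\pi_{|S}$ is the permutation of $S$ obtained by deleting from the cycles of $\pi$ the elements not in $S$. A spanned map is $(M,S)$ with $S\subseteq H$ stable by $\alpha$; $M_{|S}=(S,\sigma_{|S},\alpha_{|S})$. The dual map is $M^*=(H,\phi,\alpha)$, so $M^*_{|\bar S}=(\bar S,\phi_{|\bar S},\alpha_{|\bar S})$. $(M,S)$ is a covered map if $M_{|S}$ is a connecting unicellular map: $\sigma_{|S},\alpha_{|S}$ act transitively on $S$, $S$ contains a half-edge of every cycle of $\sigma$ (except that $S=\emptyset$ is allowed when $\sigma$ has a single cycle), and $\sigma_{|S}\alpha_{|S}$ is cyclic. The motion function is $\theta(h)=\sigma\alpha(h)$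 if $h\in S$ and $\theta(h)=\sigma(h)$ if $h\notin S$. *)

(* Defs.v *)
From mathcomp Require Import all_boot all_fingroup.
Set Implicit Arguments. Unset Strict Implicit. Unset Printing Implicit Defensive.

(* Permutations are applied as functions; composition right to left:
   (f \o g) h = f (g h). *)

Section Maps.
Variable H : finType.

(* pi_{|S}: for h in S, the first element of pi(h), pi^2(h), ... lying in S
   (deleting from the cycles of pi the elements not in S); identity outside S. *)
Definition restr (pi : H -> H) (S : {set H}) (h : H) : H :=
  if h \in S then head h [seq y <- traject pi (pi h) #|H| | y \in S] else h.

Definition face_perm (sigma alpha : {perm H}) : H -> H := fun h => sigma (alpha h).

Definition fpf_involution (alpha : {perm H}) : Prop :=
  forall h, alpha (alpha h) = h /\ alpha h != h.

(* the group generated by f and g (permutations of a finite set) acts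
   transitively on A *)
Definition transitive_on (f g : H -> H) (A : {set H}) : Prop :=
  forall x y, x \in A -> y \in A -> connect (fun a b => (b == f a) || (b == g a)) x y.

Definition cyclic_on (f : H -> H) (A : {set H}) : Prop :=
  forall x y, x \in A -> y \in A -> fconnect f x y.

Definition is_map (sigma alpha : {perm H}) (r : H) : Prop :=
  fpf_involution alpha /\ transitive_on sigma alpha [set: H].

Definition alpha_stable (alpha : {perm H}) (S : {set H}) : Prop :=
  forall h, (alpha h \in S) = (h \in S).

(* M_{|S} is a connecting unicellular map *)
Definition covered_map (sigma alpha : {perm H}) (S : {set H}) : Prop :=
  [/\ transitive_on (restr sigma S) (restr alpha S) S,
      (forall h, exists2 h', h' \in S & fconnect sigma h h')
        \/ (S = set0 /\ cyclic_on sigma [set: H])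
    & cyclic_on (restr sigma S \o restr alpha S) S].

Definition motion (sigma alpha : {perm H}) (S : {set H}) (h : H) : H :=
  if h \in S then sigma (alpha h) else sigma h.

End Maps.

(* Main.v *)
Require Import Defs.
From mathcomp Require Import all_boot all_fingroup.
Set Implicit Arguments. Unset Strict Implicit. Unset Printing Implicit Defensive.

Section R.
Variable H : finType.
Implicit Types (f g : H -> H) (S : {set H}).

Lemma head_filter_find (T : Type) (p : pred T) x0 s :
  head x0 [seq y <- s | p y] = nth x0 s (find p s).
Proof. by elim: s => //= y s IH; case: (p y). Qed.

Lemma restr_spec f S x : injective f -> x \in S ->
  exists k, [/\ 0 < k, iter k f x = restr f S x, restr f S x \in S
     & forall j, 0 < j < k -> iter j f x \notin S].
Proof.
move=> injf xS; rewrite /restr xS.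
set s := traject f (f x) #|H|.
have ho : (fingraph.order f x).-1 < #|H|.
  by rewrite prednK ?max_card // (leq_trans _ (max_card _)) //; apply/card_gt0P; exists x; rewrite inE connect0.
have hs : has (mem S) s.
  apply/(has_nthP x); exists (fingraph.order f x).-1; first by rewrite size_traject.
  change (nth x s (fingraph.order f x).-1 \in S).
  rewrite /s (set_nth_default (f x)) ?size_traject // nth_traject // -iterSr.
  have -> : (fingraph.order f x).-1.+1 = fingraph.order f x.
    by rewrite prednK //; apply/card_gt0P; exists x; rewrite inE connect0.
  by rewrite iter_order.
have hf : find (mem S) s < #|H| by rewrite -(size_traject f (f x) #|H|) -has_find.
exists (find (mem S) s).+1; split => //.
- by rewrite head_filter_find (set_nth_default (f x)) ?size_traject // nth_traject // iterSr.
- by rewrite head_filter_find; exact: (nth_find x hs).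
- move=> j /andP[j0 jk]; have := before_find x (_ : j.-1 < find (mem S) s).
  rewrite -ltnS prednK // => /(_ jk).
  have jH : j.-1 < #|H| by apply: leq_ltn_trans hf; exact: leq_trans (leq_pred j) jk.
  move=> /negbT; rewrite (@set_nth_default _ s (f x) x); last by rewrite /s size_traject.
  by rewrite /s nth_traject // -iterSr prednK.
Qed.

Lemma restr_unique f S x k : injective f -> x \in S -> 0 < k -> iter k f x \in S ->
  (forall j, 0 < j < k -> iter j f x \notin S) -> restr f S x = iter k f x.
Proof.
move=> injf xS k0 kS hk; have [k' [k0' e rS hn]] := restr_spec injf xS.
case: (ltngtP k k') => [lt|lt|eqk]; last by subst; rewrite e.
- by have := hn k; rewrite k0 lt kS => /(_ isT).
- by have := hk k'; rewrite k0' lt e rS => /(_ isT).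
Qed.

Lemma restr_fS f S x : injective f -> x \in S -> f x \in S -> restr f S x = f x.
Proof. by move=> injf xS fS; apply: (restr_unique (k:=1)) => // j /andP[/leq_trans h /h]. Qed.

Lemma iter_agree f g S x y n : f x = g y -> (forall z, z \notin S -> f z = g z) ->
  (forall j, 0 < j < n -> iter j f x \notin S) -> 0 < n -> iter n f x = iter n g y.
Proof.
move=> e fg; elim: n => // n IH hn _.
case: n IH hn => [|n] IH hn; first by [].
rewrite iterS fg; last by apply: hn; rewrite /= ltnSn.
rewrite IH // => j /andP[j0 jn]; apply: hn; rewrite j0 /=; exact: ltnW.
Qed.

Lemma restr_agree f g S x y : injective f -> injective g -> x \in S -> y \in S ->
  f x = g y -> (forall z, z \notin S -> f z = g z) -> restr f S x = restr g S y.
Proof.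
move=> injf injg xS yS e fg; have [k [k0 ek rS hn]] := restr_spec injf xS.
have eq j : 0 < j <= k -> iter j f x = iter j g y.
  move=> /andP[j0 jk]; apply: (iter_agree e fg) => // i /andP[i0 ij].
  by apply: hn; rewrite i0 (leq_trans ij jk).
rewrite -ek (restr_unique injg yS k0); first by rewrite eq // k0 leqnn.
- by rewrite -eq ?k0 ?leqnn // ek.
- move=> j /andP[j0 jk]; rewrite -eq ?j0 ?(ltnW jk) //; apply: hn; by rewrite j0.
Qed.

Lemma iter_agree0 f g S x n : (forall z, z \notin S -> f z = g z) ->
  (forall j, j < n -> iter j f x \notin S) -> iter n f x = iter n g x.
Proof.
move=> fg; elim: n => // n IH hn; rewrite !iterS -IH; last by move=> j jn; apply: hn; exact: ltnW.
by apply: fg; apply: hn.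
Qed.

Lemma hitS f g S x y : (forall z, z \notin S -> f z = g z) -> fconnect f x y -> y \in S ->
  exists2 y', y' \in S & fconnect g x y'.
Proof.
move=> fg /iter_findex <- yS.
have ex : exists n, iter n f x \in S by exists (findex f x y).
case: (ex_minnP ex) => m hm hmin; exists (iter m f x) => //.
rewrite (iter_agree0 (n:=m) fg) ?fconnect_iter // => j jm.
apply/negP => /hmin; by rewrite leqNgt jm.
Qed.

Lemma fconnect_restr f S g x y : (forall z, z \in S -> g z = restr f S z) -> injective f ->
  x \in S -> fconnect g x y -> fconnect f x y.
Proof.
move=> gq injf xS /iter_findex <-.
suff: forall n, iter n g x \in S /\ fconnect f x (iter n g x) by move=> /(_ (findex g x y)) [].
elim=> [|n [IH1 IH2]] /=; first by split => //; exact: connect0.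
have [k [k0 e rS hn]] := restr_spec injf IH1.
rewrite gq //; split => //; apply: connect_trans IH2 _; rewrite -e; exact: fconnect_iter.
Qed.

Lemma restr_fconnect f S x y : injective f -> x \in S -> y \in S -> fconnect f x y ->
  fconnect (restr f S) x y.
Proof.
move=> injf xS yS /iter_findex e; move: (findex f x y) e yS => n <- yS.
elim/ltn_ind: n x xS yS => n IH x xS yS.
case: n IH yS => [|n] IH yS; first exact: connect0.
have [k [k0 e rS hn]] := restr_spec injf xS.
case: (leqP k n.+1) => kn; last by have := hn n.+1; rewrite yS /= kn => /(_ isT).
have -> : iter n.+1 f x = iter (n.+1 - k) f (iter k f x) by rewrite -iterD subnK.
rewrite e; apply: connect_trans (fconnect1 _ x) (IH (n.+1 - k) _ _ rS _).
  by rewrite ltn_subrL k0.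
by rewrite -e -iterD subnK.
Qed.

Lemma fconnect_transfer g h S x y : (forall z, z \in S -> g z = h z) ->
  (forall z, z \in S -> h z \in S) -> x \in S -> fconnect h x y -> fconnect g x y.
Proof.
move=> gh hS xS /iter_findex <-.
suff: forall n, iter n h x \in S /\ iter n h x = iter n g x.
  by move=> /(_ (findex h x y)) [_ ->]; exact: fconnect_iter.
elim=> [|n [IH1 IH2]] //=; rewrite -IH2 gh //; split => //; exact: hS.
Qed.

Lemma to_rel f g x y : fconnect (f \o g) x y ->
  connect (fun a b => (b == f a) || (b == g a)) x y.
Proof.
move=> /iter_findex <-; elim: (findex _ x y) => [|n IH] /=; first exact: connect0.
apply: connect_trans IH _; apply: (connect_trans (y := g (iter n (f \o g) x))).
  by apply: connect1; rewrite eqxx orbT.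
by apply: connect1; rewrite eqxx.
Qed.
End R.

Lemma motion_inj (H : finType) (sigma alpha : {perm H}) S :
  alpha_stable alpha S -> injective (motion sigma alpha S).
Proof.
move=> st x y; rewrite /motion.
case xS: (x \in S); case yS: (y \in S) => /perm_inj //.
- by move/perm_inj.
- by move=> e; move: yS; rewrite -e st xS.
- by move=> e; move: xS; rewrite e st yS.
Qed.

Theorem mainTheorem5 (H : finType) (sigma alpha : {perm H}) (r : H) (S : {set H}) :
  is_map sigma alpha r -> alpha_stable alpha S ->
  [/\ {in S, restr (motion sigma alpha S) S =1 restr sigma S \o restr alpha S},
      {in ~: S, restr (motion sigma alpha S) (~: S)
                 =1 restr (face_perm sigma alpha) (~: S) \o restr alpha (~: S)}
    & covered_map sigma alpha S <-> cyclic_on (motion sigma alpha S) [set: H]].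
Proof.
move=> [fpf _] st.
have injT := @motion_inj _ sigma _ _ st.
have injA : injective alpha := @perm_inj _ alpha.
have injS : injective sigma := @perm_inj _ sigma.
have outS z : z \notin S -> motion sigma alpha S z = sigma z by rewrite /motion => /negbTE ->.
have P1 : {in S, restr (motion sigma alpha S) S =1 restr sigma S \o restr alpha S}.
  move=> h hS /=; rewrite (restr_fS injA hS) ?st //.
  by apply: restr_agree => //; [rewrite st | rewrite /motion hS].
split => //.
- move=> h hS' /=; have hS : h \notin S by rewrite inE in hS'.
  rewrite (restr_fS injA hS'); last by rewrite inE st.
  apply: restr_agree => //.
  + by move=> a b /injS /injA.
  + by rewrite inE st.
  + by rewrite outS // /face_perm (proj1 (fpf h)).
  + by move=> z; rewrite inE negbK /motion => ->.
- have P1' z : z \in S -> (restr sigma S \o restr alpha S) z = restr (motion sigma alpha S) S z.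
    by move=> zS; rewrite P1.
  split.
  + case=> [tr cov cyc] x y _ _.
    case: cov => [cov | [S0 cs]].
    * have hit x0 : exists2 x', x' \in S & fconnect (motion sigma alpha S) x0 x'.
        have [x1 x1S c] := cov x0; apply: (hitS _ c x1S) => z zS; by rewrite outS.
      have [x' x'S cx] := hit x; have [y' y'S cy] := hit y.
      apply: connect_trans cx _; rewrite (fconnect_sym injT) in cy.
      apply: connect_trans cy.
      exact: (fconnect_restr P1' injT x'S (cyc x' y' x'S y'S)).
    * rewrite (@eq_fconnect _ _ sigma) ?cs ?inE // => z.
      by rewrite /motion S0 in_set0.
  + move=> cyc; case: (set_0Vmem S) => [S0 | [s0 s0S]].
      split; first by move=> a b; rewrite S0 in_set0.
        right; split => // a b _ _; rewrite -(@eq_fconnect _ (motion sigma alpha S)) ?cyc ?inE //.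
        by move=> z; rewrite /motion S0 in_set0.
      by move=> a b; rewrite S0 in_set0.
    have cycS : cyclic_on (restr sigma S \o restr alpha S) S.
      move=> a b aS bS; apply: (fconnect_transfer P1') => //.
        by move=> z zS; have [k [_ _ rS _]] := restr_spec injT zS.
      by apply: restr_fconnect => //; apply: cyc; rewrite inE.
    split => //.
      by move=> a b aS bS; exact: to_rel (cycS a b aS bS).
    left=> h; have := cyc h s0; rewrite !inE => /(_ isT isT) c.
    by apply: (hitS _ c s0S) => z zS; rewrite outS.
Qed.
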